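(* Consider the multiset combinatorial auction model described in the context. An auction that uses only demand queries cannot guarantee even $55\%$ efficiency, even if it asks all (uncountably many) possible demand queries, i.e., one for every price vector in $[0,\infty)^m$, and even if each bidder additionally reports her true value for every bundle she requested in response to those demand queries. Precisely: there exist $n,m,c$ and value functions $(v_i)_{i\in N}$ such that, for every set $P\subseteq[0,\infty)^m$ of demand-query prices (in particular $P=[0,\infty)^m$), there are truthful demand-query responses and an allocation maximizing the inferred social welfare $\sum_i\tilde v_i(a_i;R_i)$ over $\mathcal{F}$ whose efficiency is less than $55\%$; and the same holds when the reports $R_i$ additionally contain value-query responses $(x,v_i(x))$ for every bundle $x$ that bidder $i$ requested in some demand query in $P$.
   Context: Multiset combinatorial auction: bidders $N=\{1,\dots,n\}$, items $M=\{1,\dots,m\}$ with capacities $c\in\mathbb{N}^m$. Bundles are $x\in\mathcal{X}=\{0,\dots,c_1\}\times\cdots\times\{0,\dots,c_m\}$. Each bidder $i$ has a value function $v_i:\mathcal{X}\to\mathbb{R}_{\ge0}$. Feasible allocations: $\mathcal{F}=\{a\in\mathcal{X}^n:\sum_i a_{ij}\le c_j\ \forall j\}$. Social welfare $V(a)=\sum_i v_i(a_i)$; efficiency of $a$ is $V(a)/\max_{a'\in\mathcal{F}}V(a')$. A demand query at prices $p\in\mathbb{R}^m_{\ge0}$ is answered truthfully by bidder $i$ with some $x_i^*(p)\in\arg\max_{x\in\mathcal{X}}\{v_i(x)-\langle p,x\rangle\}$. A value query for $x$ is answered with $v_i(x)$. With reports $R_i$ consisting of demand responses $R_i^{DQ}$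 (pairs $(x,p)$) and value responses $R_i^{VQ}$ (pairs $(x,v_i(x))$), the inferred value is $\tilde v_i(x;R_i)=v_i(x)$ if $x$ appears in $R_i^{VQ}$ and otherwise the supremum (a maximum when finitely many queries are asked) of $\{\langle x,p\rangle:(x,p)\in R_i^{DQ}\}\cup\{0\}$. The auction allocates according to a solution of the winner determination problem $\max_{a\in\mathcal{F}}\sum_i\tilde v_i(a_i;R_i)$. *)

(* Defs.v *)
From mathcomp Require Import all_boot all_order all_algebra.
From mathcomp Require Import all_classical all_reals.
From mathcomp Require Import Rstruct.
Set Implicit Arguments. Unset Strict Implicit. Unset Printing Implicit Defensive.
Import Order.TTheory GRing.Theory Num.Theory.
Local Open Scope ring_scope.
Local Open Scope classical_set_scope.

Notation real := Rdefinitions.R.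

Definition bundle (m : nat) := 'I_m -> nat.
Definition price (m : nat) := 'I_m -> real.

Definition in_X (m : nat) (c : 'I_m -> nat) (x : bundle m) : Prop :=
  forall j, (x j <= c j)%N.

Definition nonneg_price (m : nat) (p : price m) : Prop := forall j, 0 <= p j.

Definition dot (m : nat) (x : bundle m) (p : price m) : real :=
  \sum_(j < m) (x j)%:R * p j.

Definition feasible (n m : nat) (c : 'I_m -> nat) (a : 'I_n -> bundle m) : Prop :=
  (forall i, in_X c (a i)) /\ (forall j, (\sum_(i < n) a i j <= c j)%N).

Definition welfare (n m : nat) (v : 'I_n -> bundle m -> real)
  (a : 'I_n -> bundle m) : real := \sum_(i < n) v i (a i).

(* Optimal social welfare max_{a' in F} V(a') (F is finite and nonempty). *)
Definition opt_welfare (n m : nat) (c : 'I_m -> nat)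
  (v : 'I_n -> bundle m -> real) : real :=
  sup [set welfare v a | a in [set a | feasible c a]].

Definition demand_answer (m : nat) (c : 'I_m -> nat) (w : bundle m -> real)
  (p : price m) (x : bundle m) : Prop :=
  in_X c x /\ forall y, in_X c y -> w y - dot y p <= w x - dot x p.

Definition truthful_responses (n m : nat) (c : 'I_m -> nat)
  (v : 'I_n -> bundle m -> real) (P : set (price m))
  (d : 'I_n -> price m -> bundle m) : Prop :=
  forall i p, P p -> demand_answer c (v i) p (d i p).

Definition requested (n m : nat) (P : set (price m))
  (d : 'I_n -> price m -> bundle m) (i : 'I_n) (x : bundle m) : Prop :=
  exists2 p, P p & d i p = x.

(* Inferred value tilde v_i(x; R_i).  R_i^DQ = {(d i p, p) | p in P};
   if withVQ, R_i^VQ = {(x, v_i x) | x requested by i}, otherwise empty. *)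
Definition inferred_value (n m : nat) (v : 'I_n -> bundle m -> real)
  (P : set (price m)) (d : 'I_n -> price m -> bundle m) (withVQ : bool)
  (i : 'I_n) (x : bundle m) : real :=
  if `[< withVQ /\ requested P d i x >] then v i x
  else sup ([set dot x p | p in [set p | P p /\ d i p = x]] `|` [set 0]).

Definition inferred_welfare (n m : nat) (v : 'I_n -> bundle m -> real)
  (P : set (price m)) (d : 'I_n -> price m -> bundle m) (withVQ : bool)
  (a : 'I_n -> bundle m) : real :=
  \sum_(i < n) inferred_value v P d withVQ i (a i).

Definition wdp_solution (n m : nat) (c : 'I_m -> nat)
  (v : 'I_n -> bundle m -> real) (P : set (price m))
  (d : 'I_n -> price m -> bundle m) (withVQ : bool) (a : 'I_n -> bundle m) : Prop :=
  feasible c a /\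
  forall a', feasible c a' -> inferred_welfare v P d withVQ a' <= inferred_welfare v P d withVQ a.

(* Main.v *)
Require Import Defs.
From mathcomp Require Import all_boot all_order all_algebra.
From mathcomp Require Import all_classical all_reals.
From mathcomp Require Import Rstruct.
From mathcomp Require Import lra.
Import Order.TTheory GRing.Theory Num.Theory.
Local Open Scope ring_scope.
Local Open Scope classical_set_scope.

Definition bnd (k : nat) : bundle 1 := fun _ => k.
Definition vv : 'I_2 -> bundle 1 -> real := fun _ x => (minn (x ord0) 6)%:R.
Definition cc : 'I_1 -> nat := fun _ => 11%N.
Definition dd : 'I_2 -> price 1 -> bundle 1 :=
  fun _ p => if p ord0 < 1 then bnd 6 else bnd 0.

Lemma dotE (x : bundle 1) p : dot x p = (x ord0)%:R * p ord0.
Proof. by rewrite /dot big_ord1. Qed.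

Lemma sum2 (F : 'I_2 -> real) : \sum_(i < 2) F i = F ord0 + F (lift ord0 ord0).
Proof. by rewrite !big_ord_recl big_ord0 addr0. Qed.

Lemma sum2n (F : 'I_2 -> nat) : (\sum_(i < 2) F i = F ord0 + F (lift ord0 ord0))%N.
Proof. by rewrite !big_ord_recl big_ord0 addn0. Qed.

Lemma dd_ans i p : 0 <= p ord0 -> demand_answer cc (vv i) p (dd i p).
Proof.
move=> p0; rewrite /demand_answer /dd /vv /cc.
case: ifP => hp; (split; first by move=> j; rewrite /bnd).
- move=> y _; rewrite !dotE /bnd /=.
  case: (leqP (y ord0) 6) => hy.
  + rewrite minnn.
    have : (y ord0)%:R <= 6 :> real by rewrite (ler_nat real).
    move: (y ord0)%:R => r hr.
    have h : 0 <= 1 - p ord0 by lra.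
    have := ler_wpM2r h hr. lra.
  + rewrite minnn.
    have : 6 <= (y ord0)%:R :> real by rewrite (ler_nat real) ltnW.
    move: (y ord0)%:R => r hr. nra.
- move=> y _; rewrite !dotE /bnd /=.
  have h1 : 1 <= p ord0 by rewrite leNgt hp.
  have : (minn (y ord0) 6)%:R <= (y ord0)%:R :> real by rewrite (ler_nat real) geq_minl.
  have : 0 <= (y ord0)%:R :> real by [].
  move: (y ord0)%:R (minn _ _)%:R => r s hr hs.
  rewrite mul0r subr0 min0n /=. nra.
Qed.

Lemma inf_ge0 P w i x : 0 <= inferred_value vv P dd w i x.
Proof.
rewrite /inferred_value; case: asboolP => _; first exact: ler0n.
case: (pselect (has_sup ([set dot x p | p in [set p | P p /\ dd i p = x]] `|` [set 0]))) => hs.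
- by apply: (sup_upper_bound hs); right.
- by rewrite sup_out.
Qed.

Lemma inf_not6 P w i x : x ord0 <> 6%N -> inferred_value vv P dd w i x = 0.
Proof.
move=> hx; rewrite /inferred_value; case: asboolP => [[_ [p _ hd]] | _].
  by move: hx; rewrite /vv -hd /dd; case: ifP.
rewrite (_ : _ `|` _ = [set 0]) ?sup1 //; apply/seteqP; split => r.
- case=> [[p [_ hd] <-]|->] //; rewrite dotE.
  by move: hx; rewrite -hd /dd; case: ifP => //= _ _; rewrite mul0r.
- by move=> ->; right.
Qed.

Lemma inf6 P w i x : x ord0 = 6%N ->
  inferred_value vv P dd w i x = inferred_value vv P dd w i (bnd 6).
Proof. by move=> hx; congr inferred_value; apply: funext => j; rewrite (ord1 j). Qed.

Lemma infE P w i x : inferred_value vv P dd w i x =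
  if x ord0 == 6%N then inferred_value vv P dd w i (bnd 6) else 0.
Proof. by case: eqP => h; [apply: inf6 | apply: inf_not6]. Qed.

Definition i1 : 'I_2 := lift ord0 ord0.

Lemma opt_ge : 11 <= opt_welfare cc vv.
Proof.
rewrite /opt_welfare.
set S := [set _ | _ in _].
have hub : ubound S 12.
  move=> r [a _ <-]; rewrite /welfare sum2 /vv.
  have h1 : (minn (a ord0 ord0) 6)%:R <= 6 :> real by rewrite (ler_nat real) geq_minr.
  have h2 : (minn (a i1 ord0) 6)%:R <= 6 :> real by rewrite (ler_nat real) geq_minr.
  rewrite /i1 in h2; lra.
have hin : S 11.
  exists (fun i : 'I_2 => if i == ord0 then bnd 6 else bnd 5).
    rewrite /feasible /in_X; split => [i j | j]; first by rewrite /bnd; case: ifP.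
    by rewrite sum2n /bnd.
  by rewrite /welfare sum2 /vv /bnd /= -natrD.
apply: (sup_upper_bound _ hin); split; first by exists 11.
by exists 12.
Qed.

Theorem theorem3p2 :
  exists (n m : nat) (c : 'I_m -> nat) (v : 'I_n -> bundle m -> real),
    (forall i x, in_X c x -> 0 <= v i x) /\
    forall (P : set (price m)), (forall p, P p -> nonneg_price p) ->
    forall withVQ : bool,
    exists d : 'I_n -> price m -> bundle m,
      truthful_responses c v P d /\
      exists a : 'I_n -> bundle m,
        wdp_solution c v P d withVQ a /\
        welfare v a < (55 / 100) * opt_welfare c v.
Proof.
exists 2%N, 1%N, cc, vv; split; first by move=> *; exact: ler0n.
move=> P Pnn w; exists dd; split; first by move=> i p Pp; apply: dd_ans; exact: Pnn.
set t0 := inferred_value vv P dd w ord0 (bnd 6).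
set t1 := inferred_value vv P dd w i1 (bnd 6).
have t0p : 0 <= t0 by apply: inf_ge0.
have t1p : 0 <= t1 by apply: inf_ge0.
have hopt := opt_ge.
exists (if t1 <= t0 then (fun i : 'I_2 => if i == ord0 then bnd 6 else bnd 0)
        else (fun i : 'I_2 => if i == ord0 then bnd 0 else bnd 6)).
split; last first.
  rewrite (_ : welfare vv _ = 6); first lra.
  by rewrite /welfare sum2 /vv; case: ifP => _ /=; rewrite /bnd /= minnn min0n ?addr0 ?add0r.
split.
  rewrite /feasible /in_X; split => [i j | j]; first by case: ifP => _; case: ifP.
  by rewrite sum2n; case: ifP.
move=> a' [_ ha']; have := ha' ord0; rewrite sum2n => hs.
rewrite /inferred_welfare !sum2 !(infE P w _ (a' _)) -/t0 -/i1 -/t1.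
move: hs; rewrite -/i1 /cc.
have z0 : forall i, inferred_value vv P dd w i (bnd 0) = 0 by move=> i; apply: inf_not6.
case: (leP t1 t0) => ht /=; rewrite ?z0 -/t0 -/t1.
all: case: eqP => h0; case: eqP => h1 => hs; try lra.
all: by rewrite h0 h1 in hs.
Qed.
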